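(* Let $G=(V,E)$ be a simple graph and let $a,b$ be positive integers. Let $V_D'\subseteq V$ be such that every $v\in V_D'$ satisfies $$|E(N^a(v))|\ge|E(N^{100ab}(v))|/(2b).$$ Let $W_0=\{u\in V:\operatorname{dist}(u,V_D')\le a\}$. Then the vertex set $S$ of every connected component of $G[W_0]$ satisfies the invariant $\mathcal H$.
   Context: $\operatorname{dist}$ is the shortest-path distance in $G$; $\operatorname{dist}(u,X)=\min_{x\in X}\operatorname{dist}(u,x)$; $N^r(v)=\{u:\operatorname{dist}(u,v)\le r\}$; $E(X)$ is the set of edges with both endpoints in $X$. For a vertex set $X$ (with $V_D'$ and $a$ fixed): - $N_X$ is the maximum size of a subset $X^*\subseteq X\cap V_D'$ such that $\operatorname{dist}(u,v)>2a$ for every pair of distinct $u,v\in X^*$; - $D_X$ is the diameter of the induced subgraph $G[X]$ (equal to $\infty$ if $G[X]$ is disconnected). A vertex set $S$ satisfies invariant $\mathcal H$ if all three of the following hold: 1. for each $u\in V_D'$, either $N^a(u)\subseteq S$ or $N^a(u)\cap S=\emptyset$; 2. $D_S\le 10a\cdot N_S-(4a+1)$; 3. $N_S\le 2b$. *)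

(* Defs.v *)
(* A finite simple graph: T : finType, e : rel T symmetric, irreflexive. *)
From mathcomp Require Import all_boot all_order all_algebra.
Set Implicit Arguments. Unset Strict Implicit. Unset Printing Implicit Defensive.

Section Graph.
Variables (T : finType) (e : rel T).

(* N^r(v) = {u : dist_G(u,v) <= r}, by BFS layers in G. *)
Definition ball (r : nat) (v : T) : {set T} :=
  iter r (fun X => X :|: [set y | [exists x in X, e x y]]) [set v].

(* BFS ball inside the induced subgraph G[S]; iball S r v = {u : dist_{G[S]}(u,v) <= r}
   (for v in S). *)
Definition iball (S : {set T}) (r : nat) (v : T) : {set T} :=
  iter r (fun X => X :|: [set y in S | [exists x in X, e x y]]) [set v].

(* distance in G[S] (meaningful when u, v are connected in G[S]) *)
Definition idist (S : {set T}) (u v : T) : nat :=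
  \big[minn/#|T|]_(n < #|T|.+1 | u \in iball S n v) n.

Definition iconnected (S : {set T}) : bool :=
  [forall u in S, forall v in S, u \in iball S #|T| v].

(* D_X : diameter of G[X]; None stands for infinity (G[X] disconnected). *)
Definition diam (S : {set T}) : option nat :=
  if iconnected S then Some (\max_(u in S) \max_(v in S) idist S u v) else None.

(* E(X): unordered edges with both endpoints in X, as 2-element sets. *)
Definition Eset (X : {set T}) : {set {set T}} :=
  [set A : {set T} | [exists x in X, exists y in X, (A == [set x; y]) && e x y]].

Definition far (a : nat) (Y : {set T}) : bool :=
  [forall u in Y, forall v in Y, (u != v) ==> (u \notin ball (2 * a) v)].

Definition NX (VD : {set T}) (a : nat) (X : {set T}) : nat :=
  \max_(Y : {set T} | (Y \subset X :&: VD) && far a Y) #|Y|.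

Definition W0 (VD : {set T}) (a : nat) : {set T} :=
  [set u | [exists x in VD, u \in ball a x]].

Definition irel (W : {set T}) : rel T := fun x y => [&& e x y, x \in W & y \in W].

Definition is_component (W S : {set T}) : Prop :=
  exists2 x, x \in W & S = [set y | connect (irel W) x y].

Definition invH (VD : {set T}) (a b : nat) (S : {set T}) : Prop :=
  [/\ (forall u, u \in VD -> (ball a u \subset S) \/ [disjoint ball a u & S]),
      (match diam S with
       | Some d => (d%:Z <= (10 * a * NX VD a S)%:Z - (4 * a + 1)%:Z)%R
       | None => False
       end)
    & NX VD a S <= 2 * b].

End Graph.

(* Main.v *)
Require Import Defs.
From mathcomp Require Import all_boot all_order all_algebra.
From mathcomp Require Import zify.

Module Helpers.
Set Implicit Arguments. Unset Strict Implicit. Unset Printing Implicit Defensive.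

Section Aux.
Variables (T : finType) (e : rel T).
Hypothesis e_sym : symmetric e.
Implicit Types (W : {set T}) (u v x y z : T).

Lemma iball0 W v : iball e W 0 v = [set v]. Proof. by []. Qed.
Lemma iballS W r v : iball e W r.+1 v =
  iball e W r v :|: [set y in W | [exists x in iball e W r v, e x y]].
Proof. by rewrite /iball iterS. Qed.

Lemma iball_center W r v : v \in iball e W r v.
Proof. elim: r => [|r IH]; first by rewrite iball0 set11. by rewrite iballS inE IH. Qed.

Lemma iball_monor W r s v : r <= s -> iball e W r v \subset iball e W s v.
Proof.
elim: s => [|s IH]; first by rewrite leqn0 => /eqP ->.
rewrite leq_eqVlt => /orP[/eqP->//|]; rewrite ltnS => /IH H.
by apply: (subset_trans H); rewrite iballS subsetUl.
Qed.

Lemma iball_mono W r s v u : r <= s -> u \in iball e W r v -> u \in iball e W s v.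
Proof. by move/(iball_monor W v)/subsetP; apply. Qed.

Lemma iball_monoW W W' r v : W \subset W' -> iball e W r v \subset iball e W' r v.
Proof.
move=> sub; elim: r => [|r IH] //; apply/subsetP => y.
rewrite !iballS !inE => /orP[H|/andP[yW /existsP[x /andP[xin exy]]]].
  by rewrite (subsetP IH _ H).
apply/orP; right; rewrite (subsetP sub _ yW) /=; apply/existsP; exists x.
by rewrite (subsetP IH _ xin) exy.
Qed.

Lemma iball_step W r v u z : u \in iball e W r v -> z \in W -> e u z ->
  z \in iball e W r.+1 v.
Proof.
move=> uin zW euz; rewrite iballS !inE zW /=; apply/orP; right.
by apply/existsP; exists u; rewrite uin.
Qed.

Lemma iball_trans W r s v u z : u \in iball e W r v -> z \in iball e W s u ->
  z \in iball e W (r + s) v.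
Proof.
move=> uin; elim: s z => [|s IH] z.
  by rewrite iball0 inE addn0 => /eqP->.
rewrite iballS !inE => /orP[H|/andP[zW /existsP[x /andP[xin exz]]]].
  by rewrite addnS; apply: (iball_mono (leqnSn _)); apply: IH.
by rewrite addnS; apply: (iball_step (IH _ xin)).
Qed.

Lemma iball_sub W r v : iball e W r v \subset v |: W.
Proof.
elim: r => [|r IH]; first by rewrite iball0 sub1set setU11.
apply/subsetP => y; rewrite iballS !inE => /orP[H|/andP[yW _]].
  by move: (subsetP IH _ H); rewrite !inE.
by rewrite yW orbT.
Qed.

Lemma iball_sym W r v u : u \in iball e W r v -> v \in W -> v \in iball e W r u.
Proof.
move=> + vW; elim: r u => [|r IH] u.
  by rewrite iball0 inE => /eqP->; rewrite iball0 set11.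
rewrite iballS => /setUP[H|]; last rewrite inE => /andP[uW /existsP[x /andP[xin exu]]].
  by apply: (iball_mono (leqnSn _)); apply: IH.
have xW : x \in W by move: (subsetP (iball_sub W r v) _ xin); rewrite !inE => /orP[/eqP->|].
have H1 : x \in iball e W 1 u by apply: (iball_step (iball_center W 0 u)); rewrite // e_sym.
by rewrite -add1n; apply: iball_trans H1 (IH _ xin).
Qed.

Lemma iball_split W r s v u : u \in iball e W (r + s) v ->
  exists2 m, m \in iball e W r v & u \in iball e W s m.
Proof.
elim: s u => [|s IH] u.
  by rewrite addn0 => H; exists u => //; apply: iball_center.
rewrite addnS iballS !inE => /orP[H|/andP[uW /existsP[x /andP[xin exu]]]].
  by case: (IH _ H) => m m1 m2; exists m => //; apply: (iball_mono (leqnSn _)).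
by case: (IH _ xin) => m m1 m2; exists m => //; apply: iball_step m2 uW exu.
Qed.

Lemma ball_iball r v : ball e r v = iball e setT r v.
Proof.
rewrite /ball /iball; apply: eq_iter => X; apply/setP => y; by rewrite !inE.
Qed.

Lemma iball_ball W r v : iball e W r v \subset ball e r v.
Proof. by rewrite ball_iball; apply: iball_monoW; apply: subsetT. Qed.

Lemma ball_in W r v : ball e r v \subset W -> ball e r v \subset iball e W r v.
Proof.
rewrite ball_iball; elim: r => [|r IH] H //.
have H' : iball e setT r v \subset W.
  by apply: subset_trans H; apply: iball_monor.
apply/subsetP => y yin; have yW := subsetP H _ yin.
move: yin; rewrite iballS => /setUP[Hy|]; last rewrite inE => /andP[_ /existsP[x /andP[xin exy]]].
  exact: (iball_mono (leqnSn _) (subsetP (IH H') _ Hy)).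
exact: (iball_step (subsetP (IH H') _ xin)).
Qed.

Lemma ball_nbr W n v u : u \in iball e W n v -> u != v -> exists z, e v z.
Proof.
elim: n u => [|n IH] u; first by rewrite iball0 inE => ->.
rewrite iballS !inE => /orP[H|/andP[uW /existsP[x /andP[xin exu]]]].
  exact: IH.
case: (eqVneq x v) => [<-|xv]; first by exists u.
by move=> _; apply: IH xv.
Qed.

Lemma cross (r : rel T) (U : pred T) u s : path r u s -> u \in U -> last u s \notin U ->
  exists p q, [/\ p \in U, q \notin U & r p q].
Proof.
elim: s u => [|y s IH] u /=; first by move=> _ ->.
move=> /andP[ruy ps] uU.
case yU: (y \in U); first by apply: IH.
by move=> _; exists u, y; rewrite yU.
Qed.

Lemma sum_disj (I U : finType) (F : I -> {set U}) n (R : {set I}) : #|R| = n ->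
  (forall i j, i \in R -> j \in R -> i != j -> [disjoint F i & F j]) ->
  \sum_(i in R) #|F i| = #|\bigcup_(i in R) F i|.
Proof.
elim: n R => [|n IH] R cR Hd.
  by move/eqP: cR; rewrite cards_eq0 => /eqP ->; rewrite !big_set0 cards0.
have : 0 < #|R| by rewrite cR.
case/card_gt0P => i iR.
rewrite (bigD1 i) //= (bigD1 i iR) /=.
have E1 : \sum_(j in R | j != i) #|F j| = \sum_(j in R :\ i) #|F j|.
  by apply: eq_bigl => j; rewrite !inE andbC.
have E2 : \bigcup_(j in R | j != i) F j = \bigcup_(j in R :\ i) F j.
  by apply: eq_bigl => j; rewrite !inE andbC.
rewrite E1 E2 (IH (R :\ i)); last first.
- by move=> j k; rewrite !inE => /andP[_ jR] /andP[_ kR]; apply: Hd.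
- by move: cR; rewrite (cardsD1 i) iR => [[]].
have Hdi : [disjoint F i & \bigcup_(j in R :\ i) F j].
  apply: bigcup_disjoint => j; rewrite !inE => /andP[ji jR].
  by apply: Hd; rewrite // eq_sym.
by case: (leq_card_setU (F i) (\bigcup_(j in R :\ i) F j)) => _; rewrite Hdi => /eqP ->.
Qed.

Lemma ball_center r v : v \in ball e r v.
Proof. by rewrite ball_iball iball_center. Qed.

Lemma ball_sym r v u : u \in ball e r v -> v \in ball e r u.
Proof. by rewrite !ball_iball => H; apply: iball_sym => //; rewrite in_setT. Qed.

Lemma ball_trans r s v u z : u \in ball e r v -> z \in ball e s u -> z \in ball e (r + s) v.
Proof. rewrite !ball_iball; exact: iball_trans. Qed.

Lemma ball_mono r s v u : r <= s -> u \in ball e r v -> u \in ball e s v.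
Proof. rewrite !ball_iball; exact: iball_mono. Qed.

Lemma bigmin_le (I : eqType) (r : seq I) (P : pred I) (F : I -> nat) d i0 :
  i0 \in r -> P i0 -> \big[minn/d]_(i <- r | P i) F i <= F i0.
Proof.
elim: r => [|x r IH] //; rewrite big_cons inE => /orP[/eqP<-|ir] Pi.
  by rewrite Pi geq_minl.
case: (P x); last exact: IH.
exact: leq_trans (geq_minr _ _) (IH ir Pi).
Qed.

Lemma idist_le W u v n : u \in iball e W n v -> idist e W u v <= n.
Proof.
rewrite /idist; case: (leqP n #|T|) => [le|lt] H.
  have le' : n < #|T|.+1 by rewrite ltnS.
  have := @bigmin_le _ (index_enum 'I_#|T|.+1) (fun i : 'I_#|T|.+1 => u \in iball e W i v)
    (fun i : 'I_#|T|.+1 => nat_of_ord i) #|T| (Ordinal le') (mem_index_enum _) H.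
  by [].

apply: leq_trans (ltnW lt).
elim/big_ind: _ => //.
  by move=> x y hx _; exact: leq_trans (geq_minl x y) hx.
by move=> i _; rewrite -ltnS.
Qed.

Lemma Eset_mono (A B : {set T}) : A \subset B -> Eset e A \subset Eset e B.
Proof.
move=> sAB; apply/subsetP => Z; rewrite !inE => /existsP[x /andP[xA /existsP[y /andP[yA H]]]].
apply/existsP; exists x; rewrite (subsetP sAB _ xA); apply/existsP; exists y.
by rewrite (subsetP sAB _ yA).
Qed.

Lemma Eset_disj (A B : {set T}) : [disjoint A & B] -> [disjoint Eset e A & Eset e B].
Proof.
move=> d; rewrite -setI_eq0; apply/eqP/setP => Z; rewrite !inE.
apply/negbTE/negP => /andP[/existsP[x /andP[xA /existsP[y /andP[yA /andP[/eqP Zxy _]]]]]].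
move=> /existsP[x' /andP[xB /existsP[y' /andP[yB /andP[/eqP Zxy' _]]]]].
have : x \in Z by rewrite Zxy !inE eqxx.
rewrite Zxy' !inE => /orP[/eqP E|/eqP E]; move: xA; rewrite E.
  by rewrite (disjointFl d xB).
by rewrite (disjointFl d yB).
Qed.

End Aux.

Section Comp.
Variables (T : finType) (e : rel T).
Hypothesis e_sym : symmetric e.
Variables (W : {set T}) (x0 : T).
Hypothesis x0W : x0 \in W.
Local Notation S := ([set y | connect (irel e W) x0 y]).
Implicit Types (u v x y z : T).

Lemma irel_sym : symmetric (irel e W).
Proof.
by move=> x y; rewrite /irel e_sym; case: (x \in W); case: (y \in W); rewrite ?andbF ?andbT.
Qed.

Lemma S_W y : y \in S -> y \in W.
Proof.
rewrite inE => /connectP[p]; elim: p x0 x0W => [|z p IH] u uW /=; first by move=> _ ->.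
by case/andP => /and3P[_ _ zW] pp Hy; exact: IH zW pp Hy.
Qed.

Lemma S_close y z : y \in S -> z \in W -> e y z -> z \in S.
Proof.
move=> yS zW eyz; move: (yS); rewrite !inE => H; apply: connect_trans H (connect1 _).
by rewrite /irel eyz zW S_W.
Qed.

Lemma S_conn y z : y \in S -> z \in S -> connect (irel e W) y z.
Proof.
rewrite !inE => Hy Hz; apply: connect_trans Hz.
by rewrite (sym_connect_sym irel_sym).
Qed.

Lemma iball_S W' r v : v \in S -> iball e W' r v \subset S -> True.
Proof. by []. Qed.

Lemma iballW_S r v : v \in S -> iball e W r v \subset iball e S r v.
Proof.
move=> vS; elim: r => [|r IH] //; apply/subsetP => y.
rewrite iballS => /setUP[H|]; last rewrite inE => /andP[yW /existsP[x /andP[xin exy]]].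
  by apply: (iball_mono (leqnSn _)); apply: (subsetP IH).
have xS : x \in S.
  by move: (subsetP (iball_sub e S r v) _ (subsetP IH _ xin)); rewrite !inE => /orP[/eqP->|]; [rewrite -inE|].
exact: (iball_step (subsetP IH _ xin) (S_close xS yW exy) exy).
Qed.

Lemma iballS_S r v : v \in S -> iball e S r v \subset S.
Proof.
move=> vS; apply/subsetP => y /(subsetP (iball_sub e S r v)); rewrite !inE.
by case/orP => [/eqP->|]; [rewrite -inE|].
Qed.

Lemma path_iball v s : path (irel e W) v s -> v \in S -> last v s \in iball e S (size s) v.
Proof.
elim: s v => [|y s IH] v /=; first by move=> _ _; exact: (iball_center e S 0 v).
case/andP => /and3P[evy vW yW] ps vS.
have yS := S_close vS yW evy.
have H1 : y \in iball e S 1 v by apply: (iball_step (iball_center e S 0 v)).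
have := iball_trans H1 (IH _ ps yS); by rewrite add1n.
Qed.

Lemma S_iconn : iconnected e S.
Proof.
apply/forallP => u; apply/implyP => uS; apply/forallP => v; apply/implyP => vS.
case/connectP: (S_conn vS uS) => p pp ->.
case/shortenP: pp => p' pp' up' _.
have Hs : size p' <= #|T|.
  by move: (max_card (mem (v :: p'))); rewrite (card_uniqP up') /=; lia.
exact: (iball_mono Hs (path_iball pp' vS)).
Qed.

Lemma arith2 k m : (k * (m + m + 1) + m).+1 + m <= k.+1 * (m + m + 1).
Proof. rewrite mulSn; lia. Qed.

Section Reach.
Variables (X : {set T}) (m : nat).
Hypothesis XS : X \subset S.
Hypothesis cell : forall p, p \in S -> exists2 c, c \in X & p \in iball e S m c.

Lemma reach x k : x \in X ->
  minn k.+1 #|X| <= #|[set y in X | y \in iball e S (k * (m + m + 1)) x]|.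
Proof.
move=> xX; have xS := subsetP XS _ xX.
set L := m + m + 1.
elim: k => [|k IH].
  have : 0 < #|[set y in X | y \in iball e S (0 * L) x]|.
    by apply/card_gt0P; exists x; rewrite inE xX iball_center.
  lia.
set Rk := [set y in X | y \in iball e S (k * L) x] in IH *.
set Rk1 := [set y in X | y \in iball e S (k.+1 * L) x].
have sub : Rk \subset Rk1.
  apply/subsetP => y; rewrite !inE => /andP[-> H] /=.
  by apply: (iball_mono _ H); rewrite leq_mul2r leqnSn orbT.
have sRX : Rk1 \subset X by apply/subsetP => y; rewrite inE => /andP[].
case: (boolP (X \subset Rk)) => [sXR|].
  have := subset_leq_card (subset_trans sXR sub); lia.
case/subsetPn => y yX yR.
suff [z [zX zR zin]] : exists z, [/\ z \in X, z \notin Rk & z \in iball e S (k.+1 * L) x].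
  have : z |: Rk \subset Rk1.
    by rewrite subUset sub1set inE zX zin sub.
  move/subset_leq_card; rewrite cardsU1 zR; lia.
have yS := subsetP XS _ yX.
set U := [set p in S | [exists c in Rk, p \in iball e S m c]].
have Hle : k * L + m <= k.+1 * L by rewrite mulSn /L; lia.
case: (boolP (y \in U)) => [|yU].
  rewrite inE => /andP[_ /existsP[c /andP[cR yin]]].
  exists y; split => //; apply: (iball_mono Hle); apply: iball_trans yin.
  by move: cR; rewrite inE => /andP[].
case/connectP: (S_conn xS yS) => s ps ylast.
have xU : x \in U.
  by rewrite inE xS /=; apply/existsP; exists x; rewrite !inE xX !iball_center.
rewrite ylast in yU.
case: (cross ps xU yU) => p [q [pU qU /and3P[epq pW qW]]].
move: pU; rewrite inE => /andP[pS /existsP[c /andP[cR pin]]].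
have qS := S_close pS qW epq.
case: (cell qS) => c' c'X qin.
exists c'; split => //.
  apply: contra qU => c'R; rewrite inE qS /=; apply/existsP; exists c'; by rewrite c'R.
have c'S := subsetP XS _ c'X.
have cin : c \in iball e S (k * L) x by move: cR; rewrite inE => /andP[].
have p1 := iball_trans cin pin.
have q1 := iball_step p1 qS epq.
have c1 := iball_trans q1 (iball_sym e_sym qin c'S).
have Hle2 : (k * L + m).+1 + m <= k.+1 * L by rewrite /L arith2.
exact: (iball_mono Hle2 c1).
Qed.
End Reach.

End Comp.

End Helpers.
Import Helpers.
Set Implicit Arguments. Unset Strict Implicit. Unset Printing Implicit Defensive.

Lemma arith_N1 a : 0 < a -> a + (a + a + a) <= 10 * a * 1 - (4 * a + 1).
Proof. lia. Qed.
Lemma arith_N2 a N : 0 < a -> 2 <= N ->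
  (a+a+a) + (N.-1 * ((a+a+a) + (a+a+a) + 1) + (a+a+a)) <= 10 * a * N - (4 * a + 1).
Proof. move=> ha hN. have -> : N = N.-1.+1 by lia. set M := N.-1. rewrite mulnS. nia. Qed.
Lemma arith_b a b : 0 < a -> 0 < b -> (2 * b) * ((a+a+a)+(a+a+a)+1) + a <= 100 * a * b.
Proof. nia. Qed.
Lemma arith_Z a N D : 0 < a -> 0 < N -> D <= 10 * a * N - (4 * a + 1) ->
  (D%:Z <= (10 * a * N)%:Z - (4 * a + 1)%:Z)%R.
Proof. move=> ha hN hD. rewrite subzn; first by rewrite lez_nat. nia. Qed.

Theorem lemmaB8 (T : finType) (e : rel T)
  (e_sym : symmetric e) (e_irr : irreflexive e)
  (a b : nat) (a_pos : 0 < a) (b_pos : 0 < b) (VD : {set T})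
  (hVD : forall v, v \in VD ->
     #|Eset e (ball e (100 * a * b) v)| <= 2 * b * #|Eset e (ball e a v)|) :
  forall S : {set T}, is_component e (W0 e VD a) S -> invH e VD a b S.
Proof.
move=> S0 [x0 x0W ->].
set W := W0 e VD a in x0W *.
set S := [set y | connect (irel e W) x0 y].
have ballW : forall u, u \in VD -> ball e a u \subset W.
  move=> u uV; apply/subsetP => y yb; rewrite /W /W0 inE; apply/existsP; exists u.
  by rewrite uV yb.
have uWV : forall u, u \in VD -> u \in W.
  by move=> u uV; apply: (subsetP (ballW u uV)); apply: ball_center.
have x0S : x0 \in S by rewrite inE connect0.
have near : forall w x, w \in VD -> x \in VD -> w \in S -> x \in ball e (a + a) w ->
    x \in iball e S (a + a) w.
  move=> w x wV xV wS; rewrite ball_iball => /iball_split [m mb xb].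
  have m1 : m \in iball e W a w.
    by apply: (subsetP (ball_in (ballW w wV))); rewrite ball_iball.
  have m2 : m \in ball e a x by rewrite ball_iball; apply: iball_sym => //; rewrite in_setT.
  have m3 : m \in iball e W a x := subsetP (ball_in (ballW x xV)) m m2.
  have x1 : x \in iball e W a m := iball_sym e_sym m3 (uWV x xV).
  exact: (subsetP (iballW_S x0W (a + a) wS) _ (iball_trans m1 x1)).
have cellw : forall p, p \in S -> exists2 w, (w \in VD) && (w \in S) & p \in iball e S a w.
  move=> p pS; move: (S_W x0W pS); rewrite /W /W0 inE => /existsP[w /andP[wV pb]].
  have p1 : p \in iball e W a w := subsetP (ball_in (ballW w wV)) p pb.
  have w1 : w \in iball e W a p := iball_sym e_sym p1 (uWV w wV).
  have wS : w \in S.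
    exact: (subsetP (iballS_S a pS) _ (subsetP (iballW_S x0W a pS) _ w1)).
  exists w; first by rewrite wV wS.
  exact: (subsetP (iballW_S x0W a wS) _ p1).
pose P := fun Y : {set T} => (Y \subset S :&: VD) && far e a Y.
have P0 : P set0.
  rewrite /P sub0set /=; apply/forallP => u; apply/implyP; by rewrite inE.
set N := NX e VD a S.
have [X PX NXe] : exists2 X, P X & N = #|X|.
  exists [arg max_(Y > set0 | P Y) #|Y|]; first by case: arg_maxnP.
  by rewrite /N /NX; apply: bigmax_eq_arg.
have Nmax : forall Y, P Y -> #|Y| <= N.
  by move=> Y PY; rewrite /N /NX; apply: (leq_bigmax_cond Y PY).
have farP : forall Y u v, far e a Y -> u \in Y -> v \in Y -> u != v -> u \notin ball e (a + a) v.
  move=> Y u v /forallP/(_ u)/implyP H uY vY uv.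
  by move: (H uY) => /forallP/(_ v)/implyP/(_ vY)/implyP/(_ uv); rewrite mul2n addnn.
case/andP: PX => sXSV farX.
have XS : X \subset S by apply: subset_trans sXSV (subsetIl _ _).
have XV : X \subset VD by apply: subset_trans sXSV (subsetIr _ _).
have center : forall w, w \in S -> w \in VD -> exists2 c, c \in X & c \in ball e (a + a) w.
  move=> w wS wV.
  case: (boolP [exists c in X, c \in ball e (a + a) w]) => [/existsP[c /andP[cX cb]]|H].
    by exists c.
  case: (boolP (w \in X)) => wX; first by exists w => //; apply: ball_center.
  exfalso.
  have : P (w |: X).
    rewrite /P subUset sub1set inE wS wV sXSV /=.
    apply/forallP => u; apply/implyP; rewrite in_setU1 => Hu.
    apply/forallP => v; apply/implyP; rewrite in_setU1 => Hv; apply/implyP => uv.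
    rewrite mul2n -addnn.
    case/orP: Hu => [/eqP Eu|uX]; case/orP: Hv => [/eqP Ev|vX].
    - by move: uv; rewrite Eu Ev eqxx.
    - rewrite Eu; apply/negP => /ball_sym vb; move/negP: H; apply; apply/existsP; exists v.
      by rewrite vX vb.
    - rewrite Ev; apply/negP => ub; move/negP: H; apply; apply/existsP; exists u.
      by rewrite uX ub.
    - exact: farP farX uX vX uv.
  move/Nmax; rewrite cardsU1 wX -NXe; lia.
have cell : forall p, p \in S -> exists2 c, c \in X & p \in iball e S (a + a + a) c.
  move=> p pS; case: (cellw p pS) => w /andP[wV wS] pw.
  case: (center w wS wV) => c cX cb.
  exists c => //.
  have c1 := near w c wV (subsetP XV c cX) wS cb.
  have w1 := iball_sym e_sym c1 wS.
  exact: iball_trans w1 pw.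
have N1 : 0 < N.
  case: (cellw x0 x0S) => w /andP[wV wS] _.
  have : P [set w].
    rewrite /P sub1set inE wS wV /=; apply/forallP => u; apply/implyP; rewrite inE => /eqP->.
    apply/forallP => v; apply/implyP; rewrite inE => /eqP->; by rewrite eqxx.
  by move/Nmax; rewrite cards1.
split.
-
  move=> u uV; case: (boolP (u \in S)) => uS.
    left; apply: subset_trans (ball_in (ballW u uV)) _.
    exact: subset_trans (iballW_S x0W a uS) (iballS_S a uS).
  right; rewrite -setI_eq0; apply/eqP/setP => y; rewrite in_setI in_set0.
  apply/negbTE/negP => /andP[yb yS].
  have y1 : y \in iball e W a u := subsetP (ball_in (ballW u uV)) y yb.
  have u1 := iball_sym e_sym y1 (uWV u uV).
  have u2 := subsetP (iballS_S a yS) _ (subsetP (iballW_S x0W a yS) _ u1).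
  by move: uS; rewrite u2.
-
  have dist : forall u v, u \in S -> v \in S -> u \in iball e S (10 * a * N - (4 * a + 1)) v.
    move=> u v uS vS.
    case: (eqVneq N 1) => [N1e|N1n].
      case: (cellw u uS) => wu /andP[wuV wuS] uin.
      case: (cellw v vS) => wv /andP[wvV wvS] vin.
      case: (boolP (wu \in ball e (a + a) wv)) => H.
        have w1 := near wv wu wvV wuV wvS H.
        have u1 := iball_trans w1 uin.
        have v1 := iball_sym e_sym vin wvS.
        have u2 := iball_trans v1 u1.
        by apply: (iball_mono _ u2); rewrite N1e; apply: arith_N1.
      exfalso.
      have wne : wu != wv by apply: contra H => /eqP->; apply: ball_center.
      have : P [set wu; wv].
        rewrite /P subUset !sub1set !in_setI wuS wuV wvS wvV /=.
        apply/forallP => x; apply/implyP; rewrite !inE => Hx.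
        apply/forallP => y; apply/implyP; rewrite !inE => Hy.
        rewrite mul2n -addnn.
        case/orP: Hx => /eqP->; case/orP: Hy => /eqP->; rewrite ?eqxx //=; apply/implyP => _.
        + exact: H.
        + by apply: contra H; apply: ball_sym.
      by move/Nmax; rewrite cards2 wne N1e.
    have N2 : 2 <= N by lia.
    case: (cell u uS) => cu cuX uin.
    case: (cell v vS) => cv cvX vin.
    have := reach e_sym x0W XS cell N.-1 cvX.
    set R := [set y in X | _].
    rewrite prednK // -NXe minnn.
    move=> cR.
    have RX : R = X.
      apply/eqP; rewrite eqEcard -NXe cR andbT; apply/subsetP => y; rewrite inE; by case/andP.
    have : cu \in R by rewrite RX.
    rewrite inE => /andP[_ cu1].
    have u1 := iball_trans cu1 uin.
    have v1 := iball_sym e_sym vin (subsetP XS _ cvX).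
    have u2 := iball_trans v1 u1.
    by apply: (iball_mono _ u2); apply: arith_N2.
  rewrite /diam (S_iconn e_sym x0W).
  apply: arith_Z => //.
  apply/bigmax_leqP => u uS; apply/bigmax_leqP => v vS.
  exact: idist_le (dist u v uS vS).
-
  rewrite leqNgt; apply/negP => HN.
  have : 0 < #|X| by rewrite -NXe.
  case/card_gt0P => c0 c0X.
  pose f := fun y => #|Eset e (ball e a y)|.
  case: (@arg_minnP _ c0 (fun y => y \in X) f c0X) => x xX xmin.
  have := reach e_sym x0W XS cell (2 * b) xX.
  set R := [set y in X | _].
  move=> cR.
  have cR2 : (2 * b).+1 <= #|R|.
    apply: leq_trans cR; rewrite -NXe; lia.
  have sRX : R \subset X by apply/subsetP => y; rewrite inE; by case/andP.
  have Rin : forall y, y \in R -> y \in ball e (2 * b * (a + a + a + (a + a + a) + 1)) x.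
    move=> y; rewrite inE => /andP[_ H]; exact: (subsetP (iball_ball e S _ x) _ H).
  have sub : forall y, y \in R -> ball e a y \subset ball e (100 * a * b) x.
    move=> y yR; apply/subsetP => z zb.
    apply: (ball_mono (arith_b a_pos b_pos)); exact: ball_trans (Rin y yR) zb.
  have disj : forall y y', y \in R -> y' \in R -> y != y' ->
      [disjoint Eset e (ball e a y) & Eset e (ball e a y')].
    move=> y y' yR y'R yy; apply: Eset_disj.
    rewrite -setI_eq0; apply/eqP/setP => z; rewrite in_setI in_set0.
    apply/negbTE/negP => /andP[z1 z2].
    have yy' : y' != y by rewrite eq_sym.
    have := farP X y' y farX (subsetP sRX _ y'R) (subsetP sRX _ yR) yy'.
    by rewrite (ball_trans z1 (ball_sym e_sym z2)).
  have sumeq := @sum_disj _ _ (fun y => Eset e (ball e a y)) #|R| R (erefl _) disj.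
  have upper : \sum_(y in R) f y <= 2 * b * f x.
    apply: leq_trans (hVD x (subsetP XV _ xX)).
    rewrite /f sumeq; apply: subset_leq_card; apply/bigcupsP => y yR; apply: Eset_mono; exact: sub.
  have lower : #|R| * f x <= \sum_(y in R) f y.
    rewrite -sum_nat_const; apply: leq_sum => y yR; apply: xmin; exact: subsetP sRX _ yR.
  have fx0 : f x = 0.
    move: (f x) #|R| cR2 (leq_trans lower upper) => F r h1 h2; nia.
  have h2 : #|R| <= #|R :\ x|.+1 by rewrite (cardsD1 x); case: (x \in R).
  have : 0 < #|R :\ x| by lia.
  case/card_gt0P => y; rewrite !inE => /andP[yx /andP[yX yin]].
  case: (ball_nbr yin yx) => z exz.
  have : 0 < f x.
    apply/card_gt0P; exists [set x; z]; rewrite inE; apply/existsP; exists x.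
    rewrite ball_center; apply/existsP; exists z.
    rewrite eqxx exz andbT /=.
    have z1 : z \in iball e setT 1 x := iball_step (iball_center e setT 0 x) (in_setT z) exz.
    rewrite ball_iball andbT; exact: iball_mono a_pos z1.
  by rewrite fx0.
Qed.
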